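(* Let $k\ge3$ be odd, $p\in[0,1]$ and $q\in[0,1]$, and consider the mean-field Edge-Majority process on the infinite tree $\mathcal T$ with root $v_0$ started from i.i.d. initial states with $\Pr(x_v^{(0)}=\mathcal R)=q$. Then $$\lim_{t\to\infty}\Pr(x_{v_0}^{(t)}=\mathcal R)=\begin{cases}\varphi^+_{p,k} & \text{if } p<p_k^\star \text{ and } q>\varphi^-_{p,k},\\ 0 & \text{if } p<p_k^\star\text{ and } q<\varphi^-_{p,k},\\ 0 & \text{if } p>p_k^\star.\end{cases}$$
   Context: $\mathcal T$ is the infinite rooted tree with root $v_0$ in which every vertex has exactly $k$ children. Each vertex $v$ has a state $x_v^{(t)}\in\{\mathcal R,\mathcal B\}$ at every round $t\in\mathbb N_0$. At $t=0$ each vertex is $\mathcal R$ with probability $q$ and $\mathcal B$ otherwise, independently. For $t\ge0$, each vertex $v$ looks at its $k$ children: for each child $w$, independently of everything else, $v$ sees $w$ as $\mathcal B$ with probability $p$ and otherwise sees $x_w^{(t)}$; then $x_v^{(t+1)}$ is the state seen by the majority of the $k$ children. $F_{p,k}(x)=\Pr[\mathrm{Bin}(k,(1-p)x)\ge(k+1)/2]$. $p_k^\star\in[1/9,1/2)$ is the (unique) value such that: for $0\le p<p_k^\star$, $F_{p,k}(x)=x$ on $[0,1]$ has exactly three solutions $0<\varphi^-_{p,k}<\varphi^+_{p,k}$; for $p=p_k^\star$ exactly two; for $p>p_k^\star$ only $0$. *)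

(* Defs.v *)
From HB Require Import structures.
From mathcomp Require Import all_boot all_order all_algebra.
From mathcomp Require Import all_classical all_reals all_analysis.
Set Implicit Arguments. Unset Strict Implicit. Unset Printing Implicit Defensive.
Import Order.TTheory GRing.Theory Num.Theory.
Local Open Scope ring_scope.
Local Open Scope classical_set_scope.

(* Vertices of the infinite rooted k-ary tree: the finite word of child
   indices leading from the root (listed from the vertex up to the root;
   the root v_0 is [::], and the i-th child of v is i :: v). *)
Definition vertex (k : nat) := seq 'I_k.

Definition Fpk (R : realType) (p : R) (k : nat) (x : R) : R :=
  let r := (1 - p) * x in
  \sum_(j < k.+1 | ((k.+1)./2 <= j)%N) 'C(k, j)%:R * r ^+ j * (1 - r) ^+ (k - j).

Definition fixpt (R : realType) (p : R) (k : nat) (x : R) : Prop :=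
  0 <= x <= 1 /\ Fpk p k x = x.

Definition is_pstar (R : realType) (k : nat) (ps : R) : Prop :=
  [/\ 1/9 <= ps < 1/2,
   (forall p, 0 <= p < ps -> exists a b, 0 < a < b /\
        forall x, fixpt p k x <-> (x = 0 \/ x = a \/ x = b)),
   (exists a, 0 < a /\ forall x, fixpt ps k x <-> (x = 0 \/ x = a)) &
   (forall p, ps < p <= 1 -> forall x, fixpt p k x <-> x = 0)].

(* Index set of the primitive random variables: initial states of vertices,
   and noise coins (round t, vertex v, child i). *)
Definition rv_index (k : nat) := (vertex k + (nat * vertex k * 'I_k))%type.

Definition mutually_independent d (T : measurableType d) (R : realType)
  (P : probability T R) (I : eqType) (E : I -> set T) : Prop :=
  forall s : seq I, uniq s ->
    P (\big[setI/setT]_(j <- s) E j) = (\prod_(j <- s) P (E j))%E.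

(* The Edge-Majority process driven by initial states [init v] (true = R)
   and noise coins [coin t v i] (true = at round t, v sees its i-th child as B). *)
Fixpoint em_state (k : nat) (T : Type) (init : vertex k -> T -> bool)
  (coin : nat -> vertex k -> 'I_k -> T -> bool) (t : nat) (v : vertex k) (w : T)
  : bool :=
  match t with
  | 0 => init v w
  | t'.+1 =>
      ((k.+1)./2 <= \sum_(i < k) (~~ coin t' v i w && em_state init coin t' (i :: v) w))%N
  end.

Definition rv_event (k : nat) (T : Type) (init : vertex k -> T -> bool)
  (coin : nat -> vertex k -> 'I_k -> T -> bool) (j : rv_index k) : set T :=
  match j with
  | inl v => [set w | init v w]
  | inr (t, v, i) => [set w | coin t v i w]
  end.

(* Main.v *)
Require Import Defs.
From HB Require Import structures.
From mathcomp Require Import all_boot all_order all_algebra.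
From mathcomp Require Import all_classical all_reals all_analysis.
From mathcomp Require Import ring lra zify.
Import Order.TTheory GRing.Theory Num.Theory.
Import numFieldNormedType.Exports.
Local Open Scope ring_scope.
Local Open Scope classical_set_scope.

Section Bin.
Variable R : realType.
Implicit Types r s : R.

Definition Tm (n j i : nat) r : R :=
  if (j <= i)%N then 'C(n, i)%:R * r ^+ i * (1 - r) ^+ (n - i) else 0.
Definition Sm n j r : R := \sum_(i < n.+1) Tm n j i r.

Lemma Sm_step n j r : Sm n.+1 j r = r * Sm n j.-1 r + (1 - r) * Sm n j r.
Proof.
pose U (i : nat) := if (j <= i.+1)%N then 'C(n, i.+1)%:R * r ^+ i.+1 * (1 - r) ^+ (n - i) else 0.
have E1 : forall i : 'I_n.+1, Tm n.+1 j (lift ord0 i) r = U i + r * Tm n j.-1 i r.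
  move=> i; rewrite lift0 /Tm /U subSS.
  have -> : (j <= i.+1)%N = (j.-1 <= i)%N by clear U; case: j.
  case: ifP => _; last by rewrite mulr0 addr0.
  by rewrite binS natrD exprS; ring.
have E2 : forall i : 'I_n, (1 - r) * Tm n j (lift ord0 i) r = U i.
  move=> i; rewrite lift0 /Tm /U.
  case: ifP => _; last by rewrite mulr0.
  have -> : (n - i = (n - i.+1).+1)%N by rewrite subnSK.
  rewrite [(1 - r) ^+ (n - i.+1).+1]exprS; ring.
rewrite /Sm big_ord_recl (eq_bigr _ (fun i _ => E1 i)) big_split /=.
rewrite [X in _ = _ + (1 - r) * X]big_ord_recl mulrDr [(1 - r) * \sum_(i < n) _]mulr_sumr.
rewrite (eq_bigr _ (fun i _ => E2 i)).
rewrite big_ord_recr /=.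
have -> : U n = 0 by rewrite /U bin_small // !mul0r; case: ifP.
rewrite addr0 -mulr_sumr.
rewrite /Tm /=.
case: ifP => _; last by rewrite !mulr0 add0r addrC add0r.
rewrite !bin0 !subn0 !expr0 exprS; ring.
Qed.

Fixpoint Bt (n j : nat) r : R :=
  match n with
  | 0 => (j == 0)%:R
  | n'.+1 => match j with 0 => 1 | j'.+1 => r * Bt n' j' r + (1 - r) * Bt n' j r end
  end.

Lemma Bt_0 n r : Bt n 0 r = 1.
Proof. by case: n. Qed.

Lemma Sm_Bt n j r : Sm n j r = Bt n j r.
Proof.
elim: n j => [|n IH] j.
  rewrite /Sm big_ord1 /Tm /= bin0 !expr0 mul1r mulr1.
  by case: j.
rewrite Sm_step !IH; case: j => [|j] //=.
rewrite Bt_0; ring.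
Qed.

Lemma Fpk_Bt p k x : Fpk p k x = Bt k (k.+1)./2 ((1 - p) * x).
Proof. by rewrite -Sm_Bt /Fpk /Sm big_mkcond. Qed.

Lemma Bt_ge0 n j r : 0 <= r <= 1 -> 0 <= Bt n j r.
Proof.
move=> /andP[r0 r1]; elim: n j => [|n IH] [|j] //=; try by rewrite ?lexx ?ler01.
by apply: addr_ge0; apply: mulr_ge0 => //; rewrite subr_ge0.
Qed.

Lemma Bt_le1 n j r : 0 <= r <= 1 -> Bt n j r <= 1.
Proof.
move=> /andP[r0 r1]; elim: n j => [|n IH] [|j] //=; try by rewrite ?lexx ?ler01.
have h1 := IH j; have h2 := IH j.+1.
have h3 : 0 <= Bt n j r by apply: Bt_ge0; rewrite r0 r1.
have h4 : 0 <= Bt n j.+1 r by apply: Bt_ge0; rewrite r0 r1.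
nra.
Qed.

Lemma Bt_antij n j r : 0 <= r <= 1 -> Bt n j.+1 r <= Bt n j r.
Proof.
move=> hr; have /andP[r0 r1] := hr.
elim: n j => [|n IH] [|j] //=.
- have := Bt_le1 n 0 r hr; have := Bt_le1 n 1 r hr; rewrite Bt_0; nra.
- have := IH j; have := IH j.+1; nra.
Qed.

Lemma Bt_mono n j r s : 0 <= r -> r <= s -> s <= 1 -> Bt n j r <= Bt n j s.
Proof.
move=> r0 rs s1.
have hr : 0 <= r <= 1 by apply/andP; split => //; lra.
have hs : 0 <= s <= 1 by apply/andP; split => //; lra.
elim: n j => [|n IH] [|j] //=.
have h1 := IH j; have h2 := IH j.+1.
have h3 := Bt_antij n j s hs.
have e1 : 0 <= (s - r) * (Bt n j s - Bt n j.+1 s) by apply: mulr_ge0; lra.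
have e2 : 0 <= r * (Bt n j s - Bt n j r) by apply: mulr_ge0; lra.
have e3 : 0 <= (1 - r) * (Bt n j.+1 s - Bt n j.+1 r) by apply: mulr_ge0; lra.
nra.
Qed.

Lemma Bt_small n j r : 0 <= r <= 1 -> Bt n j r <= 2%:R ^+ n * r ^+ j.
Proof.
move=> hr; have /andP[r0 r1] := hr.
elim: n j => [|n IH] [|j] /=.
- by rewrite !expr0 mulr1.
- by rewrite expr0 mul1r; case: (j.+1 == 0) => //=; rewrite exprn_ge0.
- by rewrite expr0 mulr1 exprn_ege1 // ler1n.
- have h1 := IH j; have h2 := IH j.+1.
  have e : 0 <= 2%:R ^+ n * r ^+ j :> R by rewrite mulr_ge0 // exprn_ge0.
  rewrite exprS in h2 *; rewrite exprS.
  have h3 : r * Bt n j r <= r * (2%:R ^+ n * r ^+ j) by apply: ler_wpM2l.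
  have h4 : (1 - r) * Bt n j.+1 r <= (1 - r) * (2%:R ^+ n * (r * r ^+ j)).
    by apply: ler_wpM2l => //; lra.
  have h5 : 0 <= r * (2%:R ^+ n * r ^+ j) by apply: mulr_ge0.
  have h6 : (1 - r) * (2%:R ^+ n * (r * r ^+ j)) <= 2%:R ^+ n * (r * r ^+ j).
    have : 0 <= r * (2%:R ^+ n * (r * r ^+ j)) by rewrite !mulr_ge0 // exprn_ge0.
    lra.
  lra.
Qed.

Lemma Bt_cvg n j (h : R -> R) (x : R) :
  h y @[y --> x] --> h x -> Bt n j (h y) @[y --> x] --> Bt n j (h x).
Proof.
move=> hc; elim: n j => [|n IH] [|j] /=; try exact: cvg_cst.
apply: cvgD; apply: cvgM => //; apply: cvgB => //; exact: cvg_cst.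
Qed.

End Bin.
Arguments Bt {R}.

Section Iter.
Variable R : realType.
Variable F : R -> R.
Hypothesis Fc : forall x, F y @[y --> x] --> F x.
Hypothesis Fm : forall x y, 0 <= x -> x <= y -> y <= 1 -> F x <= F y.
Hypothesis F01 : forall x, 0 <= x <= 1 -> 0 <= F x <= 1.

Lemma iter01 q t : 0 <= q <= 1 -> 0 <= iter t F q <= 1.
Proof. by move=> hq; elim: t => //= t IH; apply: F01. Qed.

Lemma lim_fix (u : R ^nat) L : (forall t, u t.+1 = F (u t)) ->
  u @ \oo --> L -> F L = L.
Proof.
move=> hu uL.
have h1 : (F \o u) @ \oo --> F L by apply: continuous_cvg => //; exact: Fc.
have h2 : (F \o u) @ \oo --> L.
  have -> : F \o u = [sequence u n.+1]_n by apply/funext => n /=; rewrite hu.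
  by rewrite cvg_shiftS.
exact: (cvg_unique _ h1 h2).
Qed.

Lemma iter_down q : 0 <= q <= 1 -> F q <= q ->
  exists L, [/\ (fun t => iter t F q) @ \oo --> L, F L = L, 0 <= L <= q &
    forall y, 0 <= y -> y <= q -> y <= F y -> y <= L].
Proof.
move=> hq Fq; set u := fun t => iter t F q.
have u01 : forall t, 0 <= u t <= 1 by move=> t; exact: iter01.
have dec : forall t, u t.+1 <= u t.
  elim=> [|t IH] //=; rewrite /u /=.
  have /andP[a b] := u01 t; have /andP[c d] := u01 t.+1.
  by apply: Fm.
have ni : nonincreasing_seq u by apply/nonincreasing_seqP.
have cu : cvgn u.
  apply: nonincreasing_is_cvgn => //; exists 0 => _ [n _ <-].
  by have /andP[] := u01 n.
exists (limn u); split.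
- exact: cu.
- by apply: (@lim_fix u) => //; exact: cu.
- apply/andP; split.
    by apply: limr_ge => //; near=> n; have /andP[] := u01 n.
  exact: (nonincreasing_cvgn_ge ni cu 0).
- move=> y y0 yq yF.
  have : forall t, y <= u t.
    elim=> [|t IH] //=; apply: (le_trans yF); rewrite /u /=.
    apply: Fm => //; by have /andP[] := u01 t.
  by move=> hy; apply: limr_ge => //; near=> n; exact: hy.
Unshelve. all: by end_near.
Qed.

Lemma iter_up q : 0 <= q <= 1 -> q <= F q ->
  exists L, [/\ (fun t => iter t F q) @ \oo --> L, F L = L, q <= L <= 1 &
    forall y, y <= 1 -> q <= y -> F y <= y -> L <= y].
Proof.
move=> hq Fq; set u := fun t => iter t F q.
have u01 : forall t, 0 <= u t <= 1 by move=> t; exact: iter01.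
have inc : forall t, u t <= u t.+1.
  elim=> [|t IH] //=; rewrite /u /=.
  have /andP[a b] := u01 t; have /andP[c d] := u01 t.+1.
  by apply: Fm.
have nd : nondecreasing_seq u by apply/nondecreasing_seqP.
have cu : cvgn u.
  apply: nondecreasing_is_cvgn => //; exists 1 => _ [n _ <-].
  by have /andP[] := u01 n.
exists (limn u); split.
- exact: cu.
- by apply: (@lim_fix u) => //; exact: cu.
- apply/andP; split.
    exact: (nondecreasing_cvgn_le nd cu 0).
  by apply: limr_le => //; near=> n; have /andP[] := u01 n.
- move=> y y1 qy yF.
  have : forall t, u t <= y.
    elim=> [|t IH] //=; apply: (le_trans _ yF); rewrite /u /=.
    apply: Fm => //; by have /andP[] := u01 t.
  by move=> hy; apply: limr_le => //; near=> n; exact: hy.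
Unshelve. all: by end_near.
Qed.

End Iter.

Section Indep.
Variables (R : realType) (d : measure_display) (T : measurableType d).
Variable (P : probability T R).
Variables (J : eqType) (om : T -> J -> bool) (mu : J -> R).

Definition Ev (f : (J -> bool) -> bool) : set T := [set w | f (om w)].
Hypothesis hmeas : forall j, measurable (Ev (fun a => a j)).
Hypothesis hind : forall s, uniq s -> P (Ev (fun a => all a s)) = (\prod_(j <- s) mu j)%:E.

Definition Pr (A : set T) : R := fine (P A).
Definition dep (s : seq J) (f : (J -> bool) -> bool) :=
  forall a a', (forall j, j \in s -> a j = a' j) -> f a = f a'.
Definition upd (a : J -> bool) j b := fun i => if i == j then b else a i.
Definition upf (f : (J -> bool) -> bool) j b := fun a => f (upd a j b).
Definition atom (q : seq J) (c : J -> bool) := fun a => all (fun j => a j == c j) q.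

Lemma Ev_ext f g : (forall a, f a = g a) -> Ev f = Ev g.
Proof. by move=> h; rewrite /Ev; apply/seteqP; split => w /=; rewrite h. Qed.

Lemma EvI f g : Ev (fun a => f a && g a) = Ev f `&` Ev g.
Proof. by rewrite /Ev; apply/seteqP; split => w /=; [move/andP|case=> /= -> ->]. Qed.

Lemma EvU f g : Ev (fun a => f a || g a) = Ev f `|` Ev g.
Proof.
rewrite /Ev; apply/seteqP; split => w /=; first by move/orP.
by case=> /= ->; rewrite ?orbT.
Qed.

Lemma EvC f : Ev (fun a => ~~ f a) = ~` Ev f.
Proof. by apply/seteqP; split => w /=; [move/negP|move/negP]. Qed.

Lemma EvT : Ev (fun _ => true) = setT.
Proof. by apply/seteqP; split. Qed.

Lemma Ev0 : Ev (fun _ => false) = set0.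
Proof. by apply/seteqP; split. Qed.

Lemma dep_sub s s' f : {subset s <= s'} -> dep s f -> dep s' f.
Proof. by move=> ss h a a' e; apply: h => j /ss; apply: e. Qed.

Lemma dep_nil f a : dep [::] f -> f a = f (fun _ => false).
Proof. by move=> h; apply: h. Qed.

Lemma upf_dep s f j b : dep (j :: s) f -> dep s (upf f j b).
Proof.
move=> h a a' e; apply: h => i; rewrite inE /upd.
by case: (i == j) => //= /e.
Qed.

Lemma f_split f s j a : dep s f ->
  f a = (a j && upf f j true a) || (~~ a j && upf f j false a).
Proof.
move=> h; have e : forall b, a j = b -> f a = upf f j b a.
  by move=> b ajb; apply: h => i _; rewrite /upd; case: eqP => // ->.
case: (boolP (a j)) => aj /=; first by rewrite orbF; exact: e.
by apply: e; exact: negbTE.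
Qed.

Lemma mEv s f : dep s f -> measurable (Ev f).
Proof.
elim: s f => [|j s IH] f h.
  rewrite (Ev_ext f (fun _ => f (fun _ => false))); last by move=> a; exact: dep_nil.
  by case: (f _); [rewrite EvT | rewrite Ev0].
rewrite (Ev_ext _ _ (fun a => f_split f (j :: s) j a h)) EvU !EvI EvC.
apply: measurableU; apply: measurableI => //; try apply: measurableC => //;
  apply: IH; exact: upf_dep.
Qed.
Arguments mEv {s f}.

Lemma PrE A : measurable A -> P A = (Pr A)%:E.
Proof. by move=> mA; rewrite /Pr fineK // fin_num_measure. Qed.
Arguments PrE {A}.

Lemma Pr_split s f g : dep s f -> dep s g ->
  Pr (Ev f) = Pr (Ev (fun a => f a && g a)) + Pr (Ev (fun a => f a && ~~ g a)).
Proof.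
move=> hf hg.
have d1 : dep s (fun a => f a && g a).
  by move=> a a' e; rewrite (hf a a' e) (hg a a' e).
have d2 : dep s (fun a => f a && ~~ g a).
  by move=> a a' e; rewrite (hf a a' e) (hg a a' e).
have E : Ev f = Ev (fun a => f a && g a) `|` Ev (fun a => f a && ~~ g a).
  rewrite -EvU; apply: Ev_ext => a; by case: (f a); case: (g a).
have D : Ev (fun a => f a && g a) `&` Ev (fun a => f a && ~~ g a) = set0.
  by rewrite -EvI -Ev0; apply: Ev_ext => a; case: (f a); case: (g a).
have := measureU P (mEv d1) (mEv d2) D; rewrite -E => h.
by rewrite /Pr h fineD // fin_num_measure //; apply: mEv; eassumption.
Qed.
Arguments Pr_split {s f g}.

Lemma Pr1 : Pr (Ev (fun _ => true)) = 1.
Proof. by rewrite EvT /Pr probability_setT. Qed.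

Lemma Pr0 : Pr (Ev (fun _ => false)) = 0.
Proof. by rewrite Ev0 /Pr measure0. Qed.

Lemma Pr_all s : uniq s -> Pr (Ev (fun a => all a s)) = \prod_(j <- s) mu j.
Proof. by move=> u; rewrite /Pr hind. Qed.

Lemma dep_all s : dep s (fun a => all a s).
Proof. by move=> a a' e; apply: eq_in_all => j /e. Qed.

Lemma dep_atom q c : dep q (atom q c).
Proof. by move=> a a' e; apply: eq_in_all => j /e ->. Qed.

Lemma dep_and s r f g : dep s f -> dep r g -> dep (s ++ r) (fun a => f a && g a).
Proof.
move=> hf hg a a' e; rewrite (hf a a') ?(hg a a') // => j hj; apply: e;
  by rewrite mem_cat hj ?orbT.
Qed.

Arguments dep_and {s r f g}.
Arguments dep_sub {s s' f}.
Arguments upf_dep {s f}.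
Definition wt (c : J -> bool) j := if c j then mu j else 1 - mu j.

Lemma PrAtom_gen q c r : uniq (q ++ r) ->
  Pr (Ev (fun a => atom q c a && all a r)) = (\prod_(j <- q) wt c j) * \prod_(j <- r) mu j.
Proof.
elim: q r => [|j q IH] r /=.
  by move=> u; rewrite big_nil mul1r -Pr_all.
rewrite mem_cat negb_or => /andP[/andP[jq jr] u] .
rewrite big_cons.
have uq : uniq (q ++ j :: r).
  by move: u; rewrite !cat_uniq /= jr /= (negbTE jq) /=.
case: (boolP (c j)) => cj.
  have := IH (j :: r) uq; rewrite big_cons => E.
  have -> : wt c j = mu j by rewrite /wt cj.
  rewrite -mulrA (mulrCA (mu j)) -E.
  congr Pr; apply: Ev_ext => a /=.
  by case: (a j) => /=; rewrite ?andbF.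
have dh : dep (q ++ r) (fun a => atom q c a && all a r) by apply: dep_and; [exact: dep_atom| exact: dep_all].
have dh' : dep (j :: q ++ r) (fun a => atom q c a && all a r).
  by apply: dep_sub dh => x; rewrite inE => ->; rewrite orbT.
have dj : dep (j :: q ++ r) (fun a => a j).
  by move=> a a' e; apply: e; rewrite inE eqxx.
have := Pr_split dh' dj; rewrite IH // => E.
have := IH (j :: r) uq; rewrite big_cons => E2.
have -> : wt c j = 1 - mu j by rewrite /wt (negbTE cj).
have -> : Pr (Ev (fun a => (a j == false) && atom q c a && all a r)) =
   Pr (Ev (fun a => atom q c a && all a r && ~~ a j)).
  congr Pr; apply: Ev_ext => a /=.
  by case: (a j) => /=; rewrite ?andbF ?andbT.
have e1 : Pr (Ev (fun a => atom q c a && all a r && a j)) =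
   Pr (Ev (fun a => atom q c a && all a (j :: r))).
  congr Pr; apply: Ev_ext => a /=.
  by case: (a j) => /=; rewrite ?andbF ?andbT.
rewrite e1 E2 in E.
have -> : Pr (Ev (fun a => atom q c a && all a r && ~~ a j)) =
  \prod_(j0 <- q) wt c j0 * \prod_(j0 <- r) mu j0 - \prod_(j0 <- q) wt c j0 * (mu j * \prod_(j0 <- r) mu j0).
  by rewrite E; ring.
ring.
Qed.

Lemma PrAtom q c : uniq q -> Pr (Ev (atom q c)) = \prod_(j <- q) wt c j.
Proof.
move=> u; have := @PrAtom_gen q c [::]; rewrite cats0 big_nil mulr1 => <- //.
by congr Pr; apply: Ev_ext => a /=; rewrite andbT.
Qed.


Lemma dep_true : dep [::] (fun _ => true).
Proof. by []. Qed.

Lemma atom_upd q c j b : j \notin q -> forall a, atom q (upd c j b) a = atom q c a.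
Proof.
move=> jq a; apply: eq_in_all => i iq; rewrite /upd.
by case: (i =P j) => // e; rewrite -e iq in jq.
Qed.

Lemma upf_eq s g j b a : dep s g -> a j = b -> upf g j b a = g a.
Proof. by move=> h ajb; apply: h => i _; rewrite /upd; case: (i =P j) => // ->. Qed.
Arguments upf_eq {s g}.

Lemma split_at H g q c j sH sg : dep sH H -> dep sg g -> j \notin q ->
  Pr (Ev (fun a => H a && (g a && atom q c a))) =
  Pr (Ev (fun a => H a && (upf g j true a && atom (j :: q) (upd c j true) a))) +
  Pr (Ev (fun a => H a && (upf g j false a && atom (j :: q) (upd c j false) a))).
Proof.
move=> hH hg jq.
have dh : dep (j :: sH ++ sg ++ q) (fun a => H a && (g a && atom q c a)).
  apply: dep_sub (dep_and hH (dep_and hg (dep_atom q c))) => x; rewrite inE => ->.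
  by rewrite orbT.
have dj : dep (j :: sH ++ sg ++ q) (fun a => a j).
  by move=> a a' e; apply: e; rewrite inE eqxx.
rewrite (Pr_split dh dj); congr (Pr _ + Pr _); apply: Ev_ext => a /=;
  rewrite /upd eqxx atom_upd //.
- case: (boolP (a j)) => aj; last by rewrite !andbF.
  by rewrite andbT (upf_eq j true a hg) //= andbT.
- case: (boolP (a j)) => aj /=; first by rewrite !andbF.
  by rewrite andbT (upf_eq j false a hg) ?(negbTE aj) //= andbT.
Qed.

Lemma split_at1 g q c j sg : dep sg g -> j \notin q ->
  Pr (Ev (fun a => g a && atom q c a)) =
  Pr (Ev (fun a => upf g j true a && atom (j :: q) (upd c j true) a)) +
  Pr (Ev (fun a => upf g j false a && atom (j :: q) (upd c j false) a)).
Proof. move=> hg jq; exact: (split_at (fun _ => true) g q c j [::] sg dep_true hg jq). Qed.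

Definition wb j (b : bool) := if b then mu j else 1 - mu j.

Lemma PrAtom_cons q c j b : uniq q -> j \notin q ->
  Pr (Ev (atom (j :: q) (upd c j b))) = wb j b * Pr (Ev (atom q c)).
Proof.
move=> uq jq; rewrite !PrAtom /= ?jq // big_cons /wt /upd eqxx.
congr (_ * _); apply: eq_big_seq => i iq; rewrite /wt.
by case: (i =P j) => // e; rewrite -e iq in jq.
Qed.

Lemma indepB s f q c : dep s f -> uniq q -> (forall x, x \in s -> x \notin q) ->
  Pr (Ev (fun a => f a && atom q c a)) = Pr (Ev f) * Pr (Ev (atom q c)).
Proof.
elim: s f q c => [|j s IH] f q c hf uq dq.
  have e : forall a, f a = f (fun _ => false) by move=> a; exact: dep_nil.
  case E: (f (fun _ => false)).
    rewrite (Ev_ext f (fun _ => true)); last by move=> a; rewrite e E.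
    by rewrite Pr1 mul1r; congr Pr; apply: Ev_ext => a; rewrite e E.
  rewrite (Ev_ext f (fun _ => false)); last by move=> a; rewrite e E.
  by rewrite Pr0 mul0r (Ev_ext _ (fun _ => false)) ?Pr0 // => a; rewrite e E.
case: (boolP (j \in s)) => js.
  apply: IH => //; last by move=> x xs; apply: dq; rewrite inE xs orbT.
  by apply: dep_sub hf => x; rewrite inE => /orP[/eqP ->|].
have key : forall q c, uniq q -> (forall x, x \in j :: s -> x \notin q) ->
  Pr (Ev (fun a => f a && atom q c a)) =
  (Pr (Ev (upf f j true)) * wb j true + Pr (Ev (upf f j false)) * wb j false)
    * Pr (Ev (atom q c)).
  move=> q' c' uq' dq'; have jq : j \notin q' by apply: dq'; rewrite inE eqxx.
  rewrite (split_at1 f q' c' j (j :: s) hf jq).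
  have dis : forall x, x \in s -> x \notin j :: q'.
    move=> x xs; rewrite inE negb_or dq' ?inE ?xs ?orbT // andbT.
    by apply/eqP => e; rewrite -e xs in js.
  have u2 : uniq (j :: q') by rewrite /= jq uq'.
  rewrite (IH (upf f j true) (j :: q') (upd c' j true) (upf_dep j true hf) u2 dis).
  rewrite (IH (upf f j false) (j :: q') (upd c' j false) (upf_dep j false hf) u2 dis).
  rewrite !PrAtom_cons //; ring.
rewrite key //.
have K0 := key [::] c isT (fun x _ => isT : x \notin [::]).
rewrite (PrAtom [::] c) // big_nil mulr1 in K0.
have e : Pr (Ev f) = Pr (Ev (fun a => f a && atom [::] c a)).
  by congr Pr; apply: Ev_ext => a; rewrite /atom /= andbT.
by rewrite e K0.
Qed.

Arguments indepB {s f q c}.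

Lemma indepC r s f g q c : dep s f -> dep r g -> uniq q ->
  (forall x, x \in s -> x \notin q) -> (forall x, x \in r -> x \notin q) ->
  (forall x, x \in s -> x \notin r) ->
  Pr (Ev (fun a => f a && (g a && atom q c a))) =
  Pr (Ev f) * Pr (Ev (fun a => g a && atom q c a)).
Proof.
elim: r g q c => [|j r IH] g q c hf hg uq dsq drq dsr.
  have e : forall a, g a = g (fun _ => false) by move=> a; exact: dep_nil.
  case E: (g (fun _ => false)).
    rewrite (Ev_ext (fun a => f a && (g a && atom q c a)) (fun a => f a && atom q c a));
      last by move=> a; rewrite e E.
    rewrite (Ev_ext (fun a => g a && atom q c a) (atom q c)); last by move=> a; rewrite e E.
    exact: (indepB hf).
  rewrite (Ev_ext (fun a => f a && (g a && atom q c a)) (fun _ => false));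
    last by move=> a; rewrite e E andbF.
  rewrite (Ev_ext (fun a => g a && atom q c a) (fun _ => false)); last by move=> a; rewrite e E.
  by rewrite Pr0 mulr0.
case: (boolP (j \in r)) => jr.
  apply: IH => //; first by apply: dep_sub hg => x; rewrite inE => /orP[/eqP ->|].
    by move=> x xr; apply: drq; rewrite inE xr orbT.
  by move=> x xs; have := dsr x xs; rewrite inE negb_or => /andP[].
have jq : j \notin q by apply: drq; rewrite inE eqxx.
rewrite (split_at f g q c j s (j :: r) hf hg jq).
rewrite (split_at1 g q c j (j :: r) hg jq).
have u2 : uniq (j :: q) by rewrite /= jq uq.
have d1 : forall x, x \in s -> x \notin j :: q.
  move=> x xs; rewrite inE negb_or dsq // andbT.
  apply/eqP => e; have := dsr x xs; by rewrite e inE eqxx.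
have d2 : forall x, x \in r -> x \notin j :: q.
  move=> x xr; rewrite inE negb_or drq ?inE ?xr ?orbT // andbT.
  by apply/eqP => e; rewrite -e xr in jr.
have d3 : forall x, x \in s -> x \notin r.
  by move=> x xs; have := dsr x xs; rewrite inE negb_or => /andP[].
rewrite (IH (upf g j true) (j :: q) (upd c j true) hf (upf_dep j true hg) u2 d1 d2 d3).
rewrite (IH (upf g j false) (j :: q) (upd c j false) hf (upf_dep j false hg) u2 d1 d2 d3).
by rewrite mulrDr.
Qed.

Lemma indep2 s r f g : dep s f -> dep r g -> (forall x, x \in s -> x \notin r) ->
  Pr (Ev (fun a => f a && g a)) = Pr (Ev f) * Pr (Ev g).
Proof.
move=> hf hg dsr.
have := @indepC r s f g [::] (fun _ => false) hf hg isT (fun x _ => isT : x \notin [::])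
  (fun x _ => isT : x \notin [::]) dsr.
have e1 : forall h, Ev (fun a => h a && atom [::] (fun _ => false) a) = Ev h.
  by move=> h; apply: Ev_ext => a; rewrite /atom /= andbT.
have E1 : Ev (fun a => f a && (g a && atom [::] (fun _ => false) a)) = Ev (fun a => f a && g a).
  by apply: Ev_ext => a; rewrite /atom /= andbT.
by rewrite E1 e1.
Qed.

Arguments indep2 {s r f g}.

Lemma PrN s f : dep s f -> Pr (Ev (fun a => ~~ f a)) = 1 - Pr (Ev f).
Proof.
move=> hf; have dt : dep s (fun _ => true) by [].
have := Pr_split dt hf; rewrite Pr1 /= => ->; ring.
Qed.

Arguments PrN {s f}.

Lemma Pr_lit j : Pr (Ev (fun a => a j)) = mu j.
Proof.
have := Pr_all [:: j] isT; rewrite big_seq1 => <-.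
by congr Pr; apply: Ev_ext => a /=; rewrite andbT.
Qed.


Lemma binom (I : eqType) (Z : I -> (J -> bool) -> bool) (S : I -> seq J) (r : R) (l : seq I) :
  uniq l -> (forall i, i \in l -> dep (S i) (Z i)) ->
  (forall i, i \in l -> Pr (Ev (Z i)) = r) ->
  (forall i i' x, i \in l -> i' \in l -> i != i' -> x \in S i -> x \in S i' -> False) ->
  forall j, Pr (Ev (fun a => (j <= \sum_(i <- l) Z i a)%N)) = Bt (size l) j r.
Proof.
elim: l => [|x l IH] ul hd hp hdis j.
  case: j => [|j].
    by rewrite (Ev_ext _ (fun _ => true)) ?Pr1 // => a.
  by rewrite (Ev_ext _ (fun _ => false)) ?Pr0 // => a; rewrite big_nil.
move: ul => /= /andP[xl ul].
have sub : {subset l <= x :: l} by move=> i il; rewrite inE il orbT.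
have IH' := IH ul (fun i il => hd i (sub _ il)) (fun i il => hp i (sub _ il))
  (fun i i' y il il' => hdis i i' y (sub _ il) (sub _ il')).
case: j => [|j].
  by rewrite (Ev_ext _ (fun _ => true)) ?Pr1 ?Bt_0 // => a.
set L := flatten (map S l).
have sumeq : forall a a', (forall y, y \in L -> a y = a' y) ->
    (\sum_(i <- l) Z i a = \sum_(i <- l) Z i a')%N.
  move=> a a' e; apply: eq_big_seq => i il.
  rewrite (hd i (sub _ il) a a') // => y yi; apply: e; apply/flattenP.
  by exists (S i) => //; apply: map_f.
have dsum : forall j, dep L (fun a => (j <= \sum_(i <- l) Z i a)%N).
  by move=> j' a a' e; rewrite (sumeq a a' e).
have dx : dep (S x) (Z x) by apply: hd; rewrite inE eqxx.
have disj : forall y, y \in S x -> y \notin L.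
  move=> y yx; apply/negP => /flatten_mapP[i il yi].
  apply: (hdis x i y) => //; rewrite ?inE ?eqxx ?il ?orbT //.
  by apply/eqP => e; rewrite e il in xl.
have dnx : dep (S x) (fun a => ~~ Z x a) by move=> a a' e; rewrite (dx a a' e).
have d1 : dep (S x ++ L) (fun a => (j.+1 <= Z x a + \sum_(i <- l) Z i a)%N).
  move=> a a' e.
  have e1 : Z x a = Z x a' by apply: dx => y yx; apply: e; rewrite mem_cat yx.
  by rewrite e1 (sumeq a a') // => y yL; apply: e; rewrite mem_cat yL orbT.
have d2 : dep (S x ++ L) (Z x).
  by move=> a a' e; apply: dx => y yx; apply: e; rewrite mem_cat yx.
rewrite (Ev_ext _ (fun a => (j.+1 <= Z x a + \sum_(i <- l) Z i a)%N)); last first.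
  by move=> a; rewrite big_cons.
rewrite (Pr_split d1 d2) /=.
rewrite (Ev_ext _ (fun a => Z x a && (j <= \sum_(i <- l) Z i a)%N)); last first.
  by move=> a; case: (Z x a) => /=; rewrite ?andbT ?andbF ?add1n ?ltnS.
rewrite (Ev_ext (fun a => (j.+1 <= Z x a + \sum_(i <- l) Z i a)%N && ~~ Z x a) (fun a => ~~ Z x a && (j.+1 <= \sum_(i <- l) Z i a)%N)); last first.
  by move=> a; case: (Z x a) => /=; rewrite ?andbT ?andbF ?add0n.
rewrite (indep2 dx (dsum j) disj) (indep2 dnx (dsum j.+1) disj).
rewrite (PrN dx) !IH' hp ?inE ?eqxx //.
Qed.

End Indep.

Arguments Ev {d T J} om f.
Arguments Pr {R d T} P A.
Arguments dep {J} s f.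
Arguments binom {R d T P J om mu} hmeas hind {I} Z S r l.
Arguments Pr_lit {R d T P J om mu} hind j.
Arguments indep2 {R d T P J om mu} hmeas hind {s r f g}.
Arguments PrN {R d T P J om} hmeas {s f}.
Arguments EvT {d T J} om.
Arguments EvI {d T J} om f g.
Arguments dep_and {J s r f g}.

Lemma size_index_enum_ord k : size (index_enum 'I_k) = k.
Proof. by rewrite /index_enum -enumT size_enum_ord. Qed.

Section EM.
Variables (R : realType) (k : nat) (d : measure_display) (T : measurableType d).
Variable (P : probability T R).
Variables (init : vertex k -> T -> bool) (coin : nat -> vertex k -> 'I_k -> T -> bool).
Variables (p q : R).
Hypothesis hmeas : forall j, measurable (rv_event init coin j).
Hypothesis hind : mutually_independent P (rv_event init coin).
Hypothesis hq : forall v, P [set w | init v w] = q%:E.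
Hypothesis hp : forall t v i, P [set w | coin t v i w] = p%:E.

Definition om (w : T) (j : rv_index k) : bool :=
  match j with inl v => init v w | inr (t, v, i) => coin t v i w end.
Definition mu (j : rv_index k) : R := match j with inl _ => q | inr _ => p end.
Definition Fem t v (a : rv_index k -> bool) : bool :=
  em_state (fun v (a : rv_index k -> bool) => a (inl v))
    (fun t v i (a : rv_index k -> bool) => a (inr (t, v, i))) t v a.

Lemma em_om t v w : em_state init coin t v w = Fem t v (om w).
Proof.
elim: t v => [|t IH] v //=; congr (_ <= _)%N; apply: eq_bigr => i _; by rewrite IH.
Qed.

Lemma rv_Ev j : rv_event init coin j = Ev om (fun a => a j).
Proof. by case: j => [v|[[t v] i]]. Qed.

Lemma hmeas' j : measurable (Ev om (fun a => a j)).
Proof. by rewrite -rv_Ev. Qed.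

Lemma hind' s : uniq s -> P (Ev om (fun a => all a s)) = (\prod_(j <- s) mu j)%:E.
Proof.
move=> us; have := hind s us.
have -> : \big[setI/setT]_(j <- s) rv_event init coin j = Ev om (fun a => all a s).
  elim: s {us} => [|j s IH]; first by rewrite big_nil -(EvT om).
  by rewrite big_cons IH rv_Ev -EvI.
move=> ->; rewrite -prodEFin; apply: eq_bigr => -[v|[[t v] i]] _ /=.
  exact: hq.
exact: hp.
Qed.

Fixpoint supp (t : nat) (v : vertex k) : seq (rv_index k) :=
  match t with
  | 0 => [:: inl v]
  | t'.+1 => flatten [seq inr (t', v, i) :: supp t' (i :: v) | i <- index_enum 'I_k]
  end.

Lemma dep_Fem t v : dep (supp t v) (Fem t v).
Proof.
elim: t v => [|t IH] v a a' e /=.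
  by apply: e; rewrite inE eqxx.
congr (_ <= _)%N; apply: eq_bigr => i _.
have hin : forall y, y \in inr (t, v, i) :: supp t (i :: v) -> y \in supp t.+1 v.
  move=> y yi; apply/flattenP; exists (inr (t, v, i) :: supp t (i :: v)) => //.
  by apply: map_f; exact: mem_index_enum.
rewrite (e (inr (t, v, i))) ?hin ?mem_head //.
congr (nat_of_bool (_ && _)); apply: (IH (i :: v)) => y yi.
by apply: e; apply: hin; rewrite inE yi orbT.
Qed.

Definition Loc t (v : vertex k) (x : rv_index k) : Prop :=
  match x with
  | inl u => exists w, size w = t /\ u = w ++ v
  | inr (s, u, _) => (s < t)%N /\ exists w, size w = (t - s.+1)%N /\ u = w ++ v
  end.

Lemma supp_loc t v x : x \in supp t v -> Loc t v x.
Proof.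
elim: t v => [|t IH] v /=.
  by rewrite inE => /eqP ->; exists [::].
move/flatten_mapP => [i _]; rewrite inE => /orP[/eqP -> | /IH {IH}].
  by split => //; exists [::]; rewrite subnn.
case: x => [u|[[s u] i']] /=.
  by move=> [w [sw ->]]; exists (rcons w i); rewrite size_rcons sw cat_rcons.
move=> [st [w [sw ->]]]; split; first by lia.
by exists (rcons w i); rewrite size_rcons sw cat_rcons; split => //; lia.
Qed.

Lemma cat_inj_i (w w' : vertex k) i i' v : size w = size w' ->
  w ++ i :: v = w' ++ i' :: v -> i = i'.
Proof.
move=> sw e; have := congr1 (drop (size w)) e.
by rewrite {2}sw !drop_size_cat //; case.
Qed.

Lemma loc_disj t v i i' x : Loc t (i :: v) x -> Loc t (i' :: v) x -> i = i'.
Proof.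
case: x => [u|[[s u] j]] /=.
  move=> [w [sw e]] [w' [sw' e']]; apply: (cat_inj_i w w' i i' v).
    by rewrite sw sw'.
  by rewrite -e -e'.
move=> [_ [w [sw e]]] [_ [w' [sw' e']]]; apply: (cat_inj_i w w' i i' v).
  by rewrite sw sw'.
by rewrite -e -e'.
Qed.

Lemma inr_notin t v i : inr (t, v, i) \notin supp t (i :: v).
Proof. by apply/negP => /supp_loc /= []; rewrite ltnn. Qed.

Lemma prob_em t v : Pr P (Ev om (Fem t v)) = iter t (Fpk p k) q.
Proof.
elim: t v => [|t IH] v.
  exact: (Pr_lit hind' (inl v)).
rewrite iterS Fpk_Bt.
pose Z (i : 'I_k) := fun a : rv_index k -> bool => ~~ a (inr (t, v, i)) && Fem t (i :: v) a.
pose S (i : 'I_k) := inr (t, v, i) :: supp t (i :: v).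
have dZ : forall i, dep (S i) (Z i).
  move=> i; apply: (@dep_and _ [:: inr (t, v, i)] (supp t (i :: v))); last exact: dep_Fem.
  by move=> a a' e; rewrite (e (inr (t, v, i))) // mem_head.
have pZ : forall i, Pr P (Ev om (Z i)) = (1 - p) * iter t (Fpk p k) q.
  move=> i; rewrite (indep2 hmeas' hind' (s := [:: inr (t, v, i)]) (r := supp t (i :: v))).
  - rewrite IH (PrN hmeas' (s := [:: inr (t, v, i)])) ?(Pr_lit hind') //.
    by move=> a a' e; rewrite (e (inr (t, v, i))) // mem_head.
  - by move=> a a' e; rewrite (e (inr (t, v, i))) // mem_head.
  - exact: dep_Fem.
  - by move=> x; rewrite inE => /eqP ->; exact: inr_notin.
have HD : forall i i' x, i \in index_enum 'I_k -> i' \in index_enum 'I_k -> i != i' ->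
    x \in S i -> x \in S i' -> False.
  move=> i i' x _ _ ii' h1 h2; move: h1 h2; rewrite /S !inE.
  case/orP => [/eqP e1|/supp_loc L1]; case/orP => [/eqP e2|/supp_loc L2].
  - by rewrite e1 in e2; case: e2 => e; rewrite e eqxx in ii'.
  - by rewrite e1 in L2; case: L2; rewrite ltnn.
  - by rewrite e2 in L1; case: L1; rewrite ltnn.
  - by have e := loc_disj t v i i' x L1 L2; rewrite e eqxx in ii'.
have B := @binom R d T P _ om mu hmeas' hind' _ Z S ((1 - p) * iter t (Fpk p k) q)
  (index_enum 'I_k) (index_enum_uniq _) (fun i _ => dZ i) (fun i _ => pZ i) HD ((k.+1)./2).
rewrite size_index_enum_ord in B; exact: B.
Qed.

End EM.

Section FP.
Variables (R : realType) (k : nat).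
Hypothesis k3 : (3 <= k)%N.

Lemma m2 : (2 <= (k.+1)./2)%N.
Proof. by apply: (@half_leq 4 k.+1); lia. Qed.

Definition Fb (p : R) (x : R) : R := Bt k (k.+1)./2 ((1 - p) * x).

Lemma FpkE p x : Fpk p k x = Fb p x.
Proof. by rewrite Fpk_Bt. Qed.

Lemma iterE p q t : iter t (Fpk p k) q = iter t (Fb p) q.
Proof. by elim: t => //= t ->; rewrite FpkE. Qed.

Lemma fixE p x : fixpt p k x <-> (0 <= x <= 1 /\ Fb p x = x).
Proof. by rewrite /fixpt FpkE. Qed.

Lemma Fb_cvg p x0 : Fb p y @[y --> x0] --> Fb p x0.
Proof.
apply: (@Bt_cvg R k (k.+1)./2 (fun y => (1 - p) * y) x0).
by apply: cvgM; [exact: cvg_cst | exact: cvg_id].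
Qed.

Lemma Fb_pcvg x a : Fb y x @[y --> a] --> Fb a x.
Proof.
apply: (@Bt_cvg R k (k.+1)./2 (fun y => (1 - y) * x) a).
by apply: cvgM; [apply: cvgB; [exact: cvg_cst | exact: cvg_id] | exact: cvg_cst].
Qed.

Lemma Fb_mono p : 0 <= p <= 1 -> forall x y, 0 <= x -> x <= y -> y <= 1 -> Fb p x <= Fb p y.
Proof.
move=> /andP[p0 p1] x y x0 xy y1; apply: Bt_mono.
- by apply: mulr_ge0 => //; lra.
- by apply: ler_wpM2l => //; lra.
- have : 0 <= p * y by apply: mulr_ge0 => //; lra.
  nra.
Qed.

Lemma Fb01 p : 0 <= p <= 1 -> forall x, 0 <= x <= 1 -> 0 <= Fb p x <= 1.
Proof.
move=> /andP[p0 p1] x /andP[x0 x1].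
have hr : 0 <= (1 - p) * x <= 1.
  apply/andP; split; first by apply: mulr_ge0 => //; lra.
  have : 0 <= p * x by apply: mulr_ge0.
  nra.
by rewrite /Fb Bt_ge0 // Bt_le1.
Qed.

Lemma Fb0 p : Fb p 0 = 0.
Proof.
rewrite /Fb mulr0; apply/eqP; rewrite eq_le Bt_ge0 ?lexx ?ler01 // andbT.
have := @Bt_small R k (k.+1)./2 0; rewrite expr0n /=.
have hm : ((k.+1)./2 == 0)%N = false by apply/eqP => e; have := m2; rewrite e.
by rewrite hm mulr0; apply; rewrite lexx ler01.
Qed.

Lemma Fb_small p : 0 <= p <= 1 -> forall x, 0 <= x <= 1 -> Fb p x <= 2%:R ^+ k * x ^+ 2.
Proof.
move=> /andP[p0 p1] x /andP[x0 x1].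
set r := (1 - p) * x.
have r0 : 0 <= r by apply: mulr_ge0 => //; lra.
have rx : r <= x.
  rewrite /r; have : 0 <= p * x by apply: mulr_ge0.
  move=> h; nra.
have hr : 0 <= r <= 1 by apply/andP; split => //; lra.
apply: (le_trans (@Bt_small R k _ r hr)).
apply: ler_wpM2l; first by rewrite exprn_ge0.
have h1 : r ^+ (k.+1)./2 <= r ^+ 2.
  by apply: ler_wiXn2l => //; [lra | exact: m2].
apply: (le_trans h1); rewrite !expr2; nra.
Qed.

Lemma Fb_pmono p p' x : 0 <= p -> p <= p' -> p' <= 1 -> 0 <= x <= 1 -> Fb p' x <= Fb p x.
Proof.
move=> p0 pp p1 /andP[x0 x1]; apply: Bt_mono.
- by apply: mulr_ge0 => //; lra.
- by apply: ler_wpM2r => //; lra.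
- have : 0 <= p * x by apply: mulr_ge0.
  nra.
Qed.

Lemma ivt_fix (F : R -> R) : (forall x, F y @[y --> x] --> F x) ->
  forall a b, a <= b -> (F a <= a /\ b <= F b) \/ (a <= F a /\ F b <= b) ->
  exists c, a <= c <= b /\ F c = c.
Proof.
move=> Fc a b ab hs.
have fc : {within `[a, b], continuous (fun x => F x - x)}.
  by apply: continuous_subspaceT => x; apply: cvgB; [exact: Fc | exact: cvg_id].
have [|c cab e] := IVT (v := 0) ab fc.
  rewrite ge_min le_max !subr_le0 !subr_ge0.
  by case: hs => -[-> ->]; rewrite ?orbT.
exists c; split; first by move: cab; rewrite in_itv.
by apply/eqP; rewrite -subr_eq0 e.
Qed.

Lemma sign_lo p b : 0 <= p <= 1 ->
  (forall x, 0 <= x <= 1 -> Fb p x = x -> x <= b) ->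
  forall x, 0 <= x -> b <= x -> x <= 1 -> Fb p x <= x.
Proof.
move=> hp hb x x0 bx x1; rewrite leNgt; apply/negP => lt.
have /andP[_ F1] : 0 <= Fb p 1 <= 1 by apply: Fb01 => //; rewrite ler01 lexx.
have [c [/andP[xc c1] Fcc]] := @ivt_fix (Fb p) (Fb_cvg p) _ _ x1 (or_intror (conj (ltW lt) F1)).
have cb : c <= b by apply: hb => //; apply/andP; split => //; lra.
have cx : c = x by apply/eqP; rewrite eq_le; apply/andP; split; lra.
by rewrite cx in Fcc; rewrite Fcc ltxx in lt.
Qed.

Lemma sign_const p lo hi : 0 <= p <= 1 ->
  (forall x, lo < x < hi -> Fb p x <> x) ->
  forall x0 x, lo < x0 < hi -> lo < x < hi -> Fb p x0 < x0 -> Fb p x < x.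
Proof.
move=> hp hnf x0 x /andP[l0 h0] /andP[l1 h1] F0; rewrite ltNge; apply/negP => hle.
have lt : x < Fb p x.
  by rewrite lt_neqAle hle andbT; apply/eqP => e; apply: (hnf x); rewrite ?l1 ?h1 // e.
case: (leP x0 x) => hx.
  have [c [/andP[a b] e]] := @ivt_fix (Fb p) (Fb_cvg p) _ _ hx (or_introl (conj (ltW F0) (ltW lt))).
  by apply: (hnf c) => //; apply/andP; split; lra.
have [c [/andP[a b] e]] := @ivt_fix (Fb p) (Fb_cvg p) _ _ (ltW hx) (or_intror (conj (ltW lt) (ltW F0))).
by apply: (hnf c) => //; apply/andP; split; lra.
Qed.

Lemma pprime (p pstar phim phip : R) : 0 <= p -> p < pstar -> is_pstar k pstar ->
  0 < phim < phip ->
  (forall x, fixpt p k x <-> (x = 0 \/ x = phim \/ x = phip)) ->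
  (forall x, 0 <= x <= 1 -> Fb p x <= x) -> False.
Proof.
move=> p0 pps hps /andP[m0 mp] hfix Fle.
have [/andP[ps19 ps12] h3 [a [a0 ha]] _] := hps.
have fixp : forall y, 0 <= y <= 1 -> Fb p y = y -> y = 0 \/ y = phim \/ y = phip.
  by move=> y hy e; apply/hfix/fixE.
have key : forall p', p < p' < pstar -> Fb p' phim = phim /\ Fb p' phip = phip.
  move=> p' /andP[pp' p'ps].
  have [a' [b' [/andP[a'0 a'b'] hab]]] : exists a b, 0 < a < b /\
      forall x, fixpt p' k x <-> (x = 0 \/ x = a \/ x = b).
    by apply: h3; apply/andP; split => //; lra.
  have toP : forall y, fixpt p' k y -> 0 < y -> y = phim \/ y = phip.
    move=> y /fixE [hy e] y0.
    have e2 : Fb p y = y.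
      apply/eqP; rewrite eq_le Fle //=.
      rewrite -{1}e; apply: Fb_pmono => //; lra.
    by case: (fixp y hy e2) => [y00|[]]; [rewrite y00 ltxx in y0 | left | right].
  have fa : fixpt p' k a' by apply/hab; right; left.
  have fb : fixpt p' k b' by apply/hab; right; right.
  have b'0 : 0 < b' by lra.
  have [ea|ea] := toP a' fa a'0; have [eb|eb] := toP b' fb b'0.
  - by exfalso; rewrite ea eb ltxx in a'b'.
  - move/fixE: fa => [_ fa]; move/fixE: fb => [_ fb].
    by split; [rewrite -{2}ea -ea | rewrite -{2}eb -eb].
  - by exfalso; rewrite ea eb in a'b'; lra.
  - by exfalso; rewrite ea eb ltxx in a'b'.
set u := fun n : nat => pstar - (pstar - p) / 2 * harmonic n.
have hu : forall n, p < u n < pstar.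
  move=> n; have h0 := @harmonic_gt0 R n.
  have h1 : harmonic n <= 1 :> R.
    by rewrite /harmonic /= invf_le1 ?ler1n // ltr0n.
  have e1 : 0 < (pstar - p) / 2 * harmonic n by apply: mulr_gt0 => //; lra.
  have e2 : (pstar - p) / 2 * harmonic n <= (pstar - p) / 2 * 1.
    by apply: ler_wpM2l => //; lra.
  rewrite /u; apply/andP; split; lra.
have uc : u @ \oo --> pstar.
  have : (fun n => pstar - (pstar - p) / 2 * harmonic n) @ \oo --> pstar - (pstar - p) / 2 * 0.
    apply: cvgB; first exact: cvg_cst.
    apply: cvgM; first exact: cvg_cst.
    exact: cvg_harmonic.
  by rewrite mulr0 subr0.
have lim1 : forall z, (forall n, Fb (u n) z = z) -> Fb pstar z = z.
  move=> z hz.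
  have h1 : ((fun y => Fb y z) \o u) @ \oo --> Fb pstar z.
    by apply: continuous_cvg => //; exact: (Fb_pcvg z pstar).
  have h2 : ((fun y => Fb y z) \o u) @ \oo --> z.
    have -> : (fun y => Fb y z) \o u = fun _ => z by apply/funext => n /=; exact: hz.
    exact: cvg_cst.
  exact: (cvg_unique _ h1 h2).
have e1 : Fb pstar phim = phim by apply: lim1 => n; have [] := key _ (hu n).
have e2 : Fb pstar phip = phip by apply: lim1 => n; have [] := key _ (hu n).
have fm : fixpt p k phim by apply/hfix; right; left.
have fp : fixpt p k phip by apply/hfix; right; right.
move/fixE: fm => [hm _]; move/fixE: fp => [hp _].
have : fixpt pstar k phim by apply/fixE.
have : fixpt pstar k phip by apply/fixE.
move/ha => [e3|e3]; first by lra.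
move/ha => [e4|e4]; first by lra.
by rewrite -e4 in e3; rewrite e3 ltxx in mp.
Qed.

Lemma three (p pstar phim phip : R) : 0 <= p -> p < pstar -> is_pstar k pstar ->
  0 < phim < phip ->
  (forall x, fixpt p k x <-> (x = 0 \/ x = phim \/ x = phip)) ->
  [/\ (forall x, 0 < x < phim -> Fb p x < x), (forall x, phim < x < phip -> x < Fb p x),
      (forall x, phip <= x <= 1 -> Fb p x <= x) & phip <= 1].
Proof.
move=> p0 pps hps hm hfix; have /andP[m0 mp] := hm.
have [/andP[ps19 ps12] _ _ _] := hps.
have hp : 0 <= p <= 1 by apply/andP; split => //; lra.
have fixp : forall y, 0 <= y <= 1 -> Fb p y = y -> y = 0 \/ y = phim \/ y = phip.
  by move=> y hy e; apply/hfix/fixE.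
have fm : fixpt p k phim by apply/hfix; right; left.
have fp : fixpt p k phip by apply/hfix; right; right.
move/fixE: fm => [/andP[_ m1] Fm]; move/fixE: fp => [/andP[_ p1] Fp].
have s3 : forall x, phip <= x <= 1 -> Fb p x <= x.
  move=> x /andP[px x1]; apply: (sign_lo p phip hp) => //; last by lra.
  by move=> y hy e; case: (fixp y hy e) => [->|[->|->]]; lra.
have s1 : forall x, 0 < x < phim -> Fb p x < x.
  set e := 2%:R ^+ k : R.
  have e1 : 1 <= e by rewrite /e exprn_ege1 // ler1n.
  set c := (2 * e)^-1.
  have hc : c * (2 * e) = 1 by rewrite /c mulVf //; apply/eqP => h; lra.
  have c0 : 0 < c by rewrite /c invr_gt0; lra.
  set x0 := c * phim.
  have x00 : 0 < x0 by apply: mulr_gt0.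
  have ce : c * 2 <= c * (2 * e) by apply: ler_wpM2l; lra.
  have c2 : c * 2 <= 1 by apply: (le_trans ce); rewrite hc.
  have x0m : x0 < phim.
    have : c * 2 * phim <= 1 * phim by apply: ler_wpM2r; lra.
    rewrite /x0; lra.
  have Fx0 : Fb p x0 < x0.
    have h1 : Fb p x0 <= e * x0 ^+ 2 by apply: Fb_small => //; apply/andP; split; lra.
    have h2 : 2 * (e * x0 ^+ 2) = x0 * phim * (c * (2 * e)) by rewrite /x0 expr2; ring.
    rewrite hc mulr1 in h2.
    have h3 : x0 * phim <= x0 by rewrite -{2}(mulr1 x0); apply: ler_wpM2l; lra.
    lra.
  have hnf : forall y, 0 < y < phim -> Fb p y <> y.
    move=> y /andP[y0 ym] e'; have hy' : 0 <= y <= 1 by apply/andP; split; lra.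
    case: (fixp y hy' e') => [|[|]]; lra.
  have hx0 : 0 < x0 < phim by rewrite x00 x0m.
  by move=> x hx; apply: (sign_const p 0 phim hp hnf x0 x hx0 hx Fx0).
have s2 : forall x, phim < x < phip -> x < Fb p x.
  move=> x hx; rewrite ltNge; apply/negP => hle.
  have hnf : forall y, phim < y < phip -> Fb p y <> y.
    move=> y /andP[a b] e'; have hy' : 0 <= y <= 1 by apply/andP; split; lra.
    case: (fixp y hy' e') => [|[|]]; lra.
  have lt : Fb p x < x by rewrite lt_neqAle hle andbT; apply/eqP; apply: hnf.
  have allneg : forall y, phim < y < phip -> Fb p y < y.
    by move=> y hy; apply: (sign_const p phim phip hp hnf x y hx hy lt).
  apply: (@pprime p pstar phim phip p0 pps hps hm hfix) => y /andP[y0 y1].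
  case: (leP phip y) => [hpy|hyp]; first by apply: s3; rewrite hpy y1.
  case: (ltrgtP y phim) => [ym|my|->]; last by rewrite Fm.
  - case: (eqVneq y 0) => [->|yn0]; first by rewrite Fb0.
    have ypos : 0 < y by rewrite lt_neqAle eq_sym yn0 y0.
    by apply/ltW/s1; rewrite ypos ym.
  - by apply/ltW/allneg; rewrite my hyp.
by split.
Qed.

Lemma conv_main (p q pstar : R) : 0 <= p <= 1 -> 0 <= q <= 1 -> is_pstar k pstar ->
  (p < pstar -> forall phim phip, 0 < phim < phip ->
     (forall x, fixpt p k x <-> (x = 0 \/ x = phim \/ x = phip)) ->
     (phim < q -> (fun t => iter t (Fb p) q) @ \oo --> phip) /\
     (q < phim -> (fun t => iter t (Fb p) q) @ \oo --> 0)) /\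
  (pstar < p -> (fun t => iter t (Fb p) q) @ \oo --> 0).
Proof.
move=> hp hq hps; have /andP[p0 p1] := hp; have /andP[q0 q1] := hq.
have ID := @iter_down R (Fb p) (Fb_cvg p) (Fb_mono p hp) (Fb01 p hp) q hq.
have IU := @iter_up R (Fb p) (Fb_cvg p) (Fb_mono p hp) (Fb01 p hp) q hq.
split.
  move=> pps phim phip hm hfix; have /andP[m0 mp] := hm.
  have [s1 s2 s3 phip1] := @three p pstar phim phip p0 pps hps hm hfix.
  have fixp : forall y, 0 <= y <= 1 -> Fb p y = y -> y = 0 \/ y = phim \/ y = phip.
    by move=> y hy e; apply/hfix/fixE.
  have fp : fixpt p k phip by apply/hfix; right; right.
  move/fixE: fp => [_ Fp].
  split => hq'.
    case: (leP q phip) => qp.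
      have Fq : q <= Fb p q.
        case: (eqVneq q phip) => [->|qn]; first by rewrite Fp.
        by apply/ltW/s2; rewrite hq' lt_neqAle qn qp.
      have [L [cv FL /andP[qL L1] hy]] := IU Fq.
      have Lp : L <= phip by apply: hy => //; rewrite Fp.
      have : L = phip.
        have hy' : 0 <= L <= 1 by apply/andP; split; lra.
        case: (fixp L hy' FL) => [|[|]]; lra.
      by move=> <-.
    have Fq : Fb p q <= q by apply: s3; rewrite (ltW qp) q1.
    have [L [cv FL /andP[L0 Lq] hy]] := ID Fq.
    have Lp : phip <= L by apply: hy => //; [lra | lra | rewrite Fp].
    have : L = phip.
      have hy' : 0 <= L <= 1 by apply/andP; split; lra.
      case: (fixp L hy' FL) => [|[|]]; lra.
    by move=> <-.
  have Fq : Fb p q <= q.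
    case: (eqVneq q 0) => [->|qn]; first by rewrite Fb0.
    have qpos : 0 < q by rewrite lt_neqAle eq_sym qn q0.
    by apply/ltW/s1; rewrite qpos hq'.
  have [L [cv FL /andP[L0 Lq] hy]] := ID Fq.
  have : L = 0.
    have hy' : 0 <= L <= 1 by apply/andP; split; lra.
    case: (fixp L hy' FL) => [|[|]]; lra.
  by move=> <-.
move=> pps.
have [_ _ _ h4] := hps.
have hf := h4 p (ltac:(by apply/andP; split)).
have Fq : Fb p q <= q.
  apply: (sign_lo p 0 hp) => // y hy e.
  by have := (proj1 (hf y)) (proj2 (fixE p y) (conj hy e)) => ->.
have [L [cv FL /andP[L0 Lq] hy]] := ID Fq.
have : L = 0.
  apply/(proj1 (hf L))/fixE; split => //; apply/andP; split; lra.
by move=> <-.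
Qed.

End FP.

Lemma cvgE (R : realType) (u : R ^nat) (L : R) :
  u @ \oo --> L -> (fun t => (u t)%:E) @ \oo --> L%:E.
Proof.
move=> h; apply: cvg_EFin; first by near=> t.
by have -> : fine \o (fun t => (u t)%:E) = u by apply/funext.
Unshelve. all: by end_near.
Qed.

Theorem theorem4p3 (R : realType) (k : nat) (p q : R) (pstar : R)
  (d : measure_display) (T : measurableType d) (P : probability T R)
  (init : vertex k -> T -> bool) (coin : nat -> vertex k -> 'I_k -> T -> bool) :
  (3 <= k)%N -> odd k ->
  0 <= p <= 1 -> 0 <= q <= 1 ->
  is_pstar k pstar ->
  (forall j, measurable (rv_event init coin j)) ->
  mutually_independent P (rv_event init coin) ->
  (forall v, P [set w | init v w] = q%:E) ->
  (forall t v i, P [set w | coin t v i w] = p%:E) ->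
  let prR := fun t => P [set w | em_state init coin t [::] w] in
  (p < pstar -> forall phim phip : R, 0 < phim < phip ->
     (forall x, fixpt p k x <-> (x = 0 \/ x = phim \/ x = phip)) ->
     (phim < q -> prR @ \oo --> phip%:E) /\
     (q < phim -> prR @ \oo --> 0%E)) /\
  (pstar < p -> prR @ \oo --> 0%E).
Proof.
move=> k3 ok hp hq hps hm hind hqv hpv prR.
have E : prR = fun t => (iter t (Fb R k p) q)%:E.
  apply/funext => t; rewrite /prR.
  have -> : [set w | em_state init coin t [::] w] = Ev (om k d T init coin) (Fem k t [::]).
    by apply/seteqP; split => w /=; rewrite em_om.
  rewrite (PrE R d T P _ (mEv d T _ (om k d T init coin) (hmeas' k d T init coin hm) _ _ (dep_Fem k t [::]))).
  by rewrite (prob_em R k d T P init coin p q hm hind hqv hpv) iterE.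
have [C1 C2] := @conv_main R k k3 p q pstar hp hq hps.
rewrite E; split.
  move=> pps phim phip hmm hfix; have [D1 D2] := C1 pps phim phip hmm hfix.
  by split => h; apply: cvgE; [exact: D1 | exact: D2].
by move=> h; apply: cvgE; exact: C2.
Qed.
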